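(* Let $\mu>0$ and $x_m\ge 0$. Let $g:[0,+\infty)\to(0,+\infty)$ be continuous and strictly decreasing with $g(+\infty)=0$, and let $\beta:[x_m,+\infty)\to[0,+\infty)$ be globally Lipschitz with $\beta(x)>0$ for almost every $x\in[x_0,+\infty)$, for some $x_0\ge x_m$ ($\beta$ is not assumed to be monotone). For $b\ge 0$ define $$R(b):=\int_0^\infty \beta\left( x_m + \int_0^a g\left( \frac{e^{-\mu\tau}}{\mu}b\right) d\tau \right) e^{-\mu a}\,da, \qquad F(b):=bR(b).$$ Then $F$ is strictly increasing on $[0,+\infty)$.
   Context: $F(b)$ coincides with the value of the functional $\phi\mapsto\int_0^\infty \beta\left( x_m + \int_0^a g\left( e^{-\mu(\tau -a)} \int_a^\infty e^{-\mu s} \phi(-s)\,ds \right) d\tau \right) e^{-\mu a} \phi(-a)\,da$ evaluated at the constant function $\phi\equiv b$; this functional defines the renewal equation $b(t)=\int_0^\infty \beta\left( x_m + \int_0^a g\left( e^{-\mu(\tau -a)} \int_a^\infty e^{-\mu s} b(t-s)\,ds \right) d\tau \right) e^{-\mu a} b(t-a)\,da$ modelling tree population birth rate, with $g$ the growth rate, $\beta$ the per capita reproduction rate, $\mu$ the death rate. *)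

(* Defs.v *)
From HB Require Import structures.
From mathcomp Require Import all_boot all_order all_algebra.
From mathcomp Require Import all_classical all_reals all_analysis.
Set Implicit Arguments. Unset Strict Implicit. Unset Printing Implicit Defensive.
Import Order.TTheory GRing.Theory Num.Theory.
Import numFieldNormedType.Exports.
Local Open Scope classical_set_scope.
Local Open Scope ring_scope.

Definition inner_size {R : realType} (mu : R) (g : R -> R) (b a : R) : R :=
  Rintegral lebesgue_measure `[(0:R), a]%classic
    (fun tau => g (expR (- (mu * tau)) / mu * b)).

(* R(b) = int_0^oo beta(x_m + inner) e^{-mu a} da, as an extended real
   (integrand is nonnegative, so the Lebesgue integral is always defined). *)
Definition Rfun {R : realType} (mu xm : R) (g beta : R -> R) (b : R) : \bar R :=
  (\int[lebesgue_measure]_(a in `[0%R, +oo[%classic)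
     (beta (xm + inner_size mu g b a) * expR (- (mu * a)))%:E)%E.

Definition Ffun {R : realType} (mu xm : R) (g beta : R -> R) (b : R) : \bar R :=
  (b%:E * Rfun mu xm g beta b)%E.

(* Main.v *)
Require Import Defs.
From HB Require Import structures.
From mathcomp Require Import all_boot all_order all_algebra.
From mathcomp Require Import all_classical all_reals all_analysis.
From mathcomp Require Import ring lra.
From mathcomp Require Import measurable_realfun.
Import Order.TTheory GRing.Theory Num.Theory.
Import numFieldNormedType.Exports.
Local Open Scope classical_set_scope.
Local Open Scope ring_scope.
Set Implicit Arguments.
Unset Strict Implicit.

Lemma lip_continuous (R : realType) (f : R -> R) (K : R) :
  (forall x y, `|f x - f y| <= K * `|x - y|) -> continuous f.
Proof.
move=> Hf x; apply/cvgrPdist_lt => e e0.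
have K1 : 0 < `|K| + 1 by rewrite ltr_wpDl.
near=> y.
rewrite (le_lt_trans (Hf x y))//.
rewrite (@le_lt_trans _ _ (`|K| * `|x - y|)) //.
  by rewrite ler_wpM2r // ler_norm.
have : `|x - y| < e / (`|K| + 1).
  near: y; apply: (@cvgr_dist_lt _ _ _ (nbhs x) _ id) => //.
  by rewrite divr_gt0.
rewrite ltr_pdivlMr // => H.
have H1 : `|K| * `|x - y| <= (`|K| + 1) * `|x - y|.
  by rewrite ler_wpM2r // lerDl.
apply: le_lt_trans H1 _; by rewrite mulrC.
Unshelve. all: by end_near. Qed.

Lemma cont_meas (R : realType) (f : R -> R) (D : set R) : continuous f ->
  measurable_fun D (EFin \o f).
Proof.
move=> cf; apply/measurable_EFinP; apply: measurable_funTS.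
exact: continuous_measurable_fun.
Qed.

Section Main.
Context (R : realType) (mu xm : R) (g beta : R -> R).
Context (mu_gt0 : 0 < mu) (xm_ge0 : 0 <= xm).
Context (gc : {within `[0%R, +oo[%classic, continuous g}).
Context (gpos : forall x, 0 <= x -> 0 < g x).
Context (gdec : forall x y, 0 <= x -> x < y -> g y < g x).
Context (bpos : forall x, xm <= x -> 0 <= beta x).
Context (L : R) (bL : forall x y, xm <= x -> xm <= y ->
       `|beta x - beta y| <= L * `|x - y|).

Lemma g_cont_pos x : 0 < x -> {for x, continuous g}.
Proof.
move=> x0; have [+ _] := (continuous_within_itvcyP 0 g).1 gc.
by apply; rewrite in_itv /= x0.
Qed.

Lemma g_right0 : g x @[x --> 0^'+] --> g 0.
Proof. by have [_ +] := (continuous_within_itvcyP 0 g).1 gc. Qed.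

Lemma g_le_dec x y : 0 <= x -> x <= y -> g y <= g x.
Proof.
move=> x0; rewrite le_eqVlt => /predU1P[-> //|xy].
exact/ltW/gdec.
Qed.

Definition bt x := beta (Num.max x xm).

Lemma bt_lip x y : `|bt x - bt y| <= `|L| * `|x - y|.
Proof.
rewrite /bt (le_trans (bL _ _)) ?le_max ?lexx ?orbT //.
have H1 : `|Num.max x xm - Num.max y xm| <= `|x - y|.
  case: (leP x xm) => hx; case: (leP y xm) => hy.
  - by rewrite subrr normr0.
  - rewrite !ler0_norm ?subr_le0; [lra|lra|lra].
  - rewrite !ger0_norm ?subr_ge0; [lra|lra|lra].
  - by [].
apply: (le_trans (y := `|L| * `|Num.max x xm - Num.max y xm|)).
  by rewrite ler_wpM2r // ler_norm.
by rewrite ler_wpM2l.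
Qed.

Lemma bt_cont : continuous bt.
Proof. apply: (@lip_continuous R bt `|L|) => x y; exact: bt_lip. Qed.

Lemma bt_ge0 x : 0 <= bt x.
Proof. by apply: bpos; rewrite le_max lexx orbT. Qed.

Lemma btE x : xm <= x -> bt x = beta x.
Proof. by move=> h; rewrite /bt max_l. Qed.


Section WithB.
Context (b : R) (b_gt0 : 0 < b).

Definition v t := expR (- (mu * t)) / mu * b.
Definition h t := g (v t).
Definition Phi := inner_size mu g b.
Definition mB := g (b / mu).

Lemma v_gt0 t : 0 < v t.
Proof. by rewrite /v mulr_gt0 // divr_gt0 // expR_gt0. Qed.

Lemma v_le t : 0 <= t -> v t <= b / mu.
Proof.
move=> t0; rewrite /v.
have e1 : expR (- (mu * t)) <= 1 by rewrite expR_le1 oppr_le0 mulr_ge0 // ltW.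
have mi : 0 < mu^-1 by rewrite invr_gt0.
have hb : 0 < mu^-1 * b by rewrite mulr_gt0.
rewrite mulrC (mulrC _ (mu^-1)) mulrA.
have := expR_gt0 (- (mu * t)); nra.
Qed.

Lemma v_cont : continuous v.
Proof.
move=> t; rewrite /v.
apply: cvgM; last exact: cvg_cst.
apply: cvgM; last exact: cvg_cst.
apply: continuous_comp; last exact: continuous_expR.
apply: cvgN; apply: cvgM; [exact: cvg_cst|exact: cvg_id].
Qed.

Lemma h_cont : continuous h.
Proof.
move=> t; apply: continuous_comp; first exact: v_cont.
exact/g_cont_pos/v_gt0.
Qed.

Lemma mB_gt0 : 0 < mB.
Proof. by apply: gpos; rewrite divr_ge0 // ltW. Qed.

Lemma h_ge t : 0 <= t -> mB <= h t.
Proof. by move=> t0; apply: g_le_dec; [exact/ltW/v_gt0|exact: v_le]. Qed.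

Lemma h_le t : h t <= g 0.
Proof. by apply: g_le_dec => //; exact/ltW/v_gt0. Qed.

Lemma h_gt0 t : 0 < h t.
Proof. exact/gpos/ltW/v_gt0. Qed.

Lemma cont_int (f : R -> R) (A : set R) : continuous f -> compact A ->
  lebesgue_measure.-integrable A (EFin \o f).
Proof.
move=> cf cA; apply: continuous_compact_integrable => //.
exact: continuous_subspaceT.
Qed.

Lemma h_int (u : R) : lebesgue_measure.-integrable `[0, u] (EFin \o h).
Proof. apply: cont_int; [exact: h_cont|exact: segment_compact]. Qed.

Lemma PhiE a : Phi a = \int[lebesgue_measure]_(t in `[0, a]) h t.
Proof. by []. Qed.


Lemma Phi_split a1 a2 : 0 <= a1 -> a1 <= a2 ->
  Phi a2 - Phi a1 = \int[lebesgue_measure]_(t in `]a1, a2]) h t.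
Proof.
move=> a10 a12; rewrite !PhiE.
have := @Rintegral_itvB R h (BLeft 0) (BRight a2) a1 (h_int a2).
by rewrite !bnd_simp; apply.
Qed.

Lemma Rint_cst_oc (c a1 a2 : R) : a1 <= a2 ->
  \int[lebesgue_measure]_(t in `]a1, a2]) c = c * (a2 - a1).
Proof.
move=> a12; rewrite Rintegral_cst //.
have := lebesgue_measure_itv `]a1, a2]; rewrite /= => ->.
case: ifPn; rewrite lte_fin.
  by move=> _; rewrite -EFinB /=.
rewrite -leNgt => h21; have -> : a2 = a1 by apply/le_anti/andP.
by rewrite subrr /= mulr0.
Qed.

Lemma Phi_bounds a1 a2 : 0 <= a1 -> a1 <= a2 ->
  mB * (a2 - a1) <= Phi a2 - Phi a1 <= g 0 * (a2 - a1).
Proof.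
move=> a10 a12; rewrite Phi_split //.
have sub : `]a1, a2] `<=` `[0, a2].
  by apply: subset_itvr; rewrite bnd_simp.
have hi : lebesgue_measure.-integrable `]a1, a2] (EFin \o h).
  have := h_int a2; apply: integrableS => //.
have ci c : lebesgue_measure.-integrable `]a1, a2] (EFin \o cst c).
  have cc : continuous (cst c : R -> R) by move=> x; exact: cvg_cst.
  have := @cont_int (cst c) `[0, a2] cc (@segment_compact R 0 a2); apply: integrableS => //.
apply/andP; split.
  rewrite -Rint_cst_oc //; apply: le_Rintegral => //; first exact: (ci mB).
  move=> t; rewrite /= in_itv /= => /andP[t1 _].
  apply: h_ge; exact: le_trans (ltW t1).
rewrite -Rint_cst_oc //; apply: le_Rintegral => //; first exact: (ci (g 0)).
move=> t _; exact: h_le.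
Qed.

Lemma Phi_nonpos a : a <= 0 -> Phi a = 0.
Proof.
rewrite PhiE le_eqVlt => /predU1P[->|a0].
  by rewrite set_itv1 Rintegral_set1.
by rewrite set_itv_ge ?Rintegral_set0 // bnd_simp -ltNge.
Qed.

Lemma Phi0 : Phi 0 = 0.
Proof. exact: Phi_nonpos. Qed.

Lemma g0_gt0 : 0 < g 0.
Proof. exact: gpos. Qed.

Lemma Phi_lip x y : `|Phi x - Phi y| <= g 0 * `|x - y|.
Proof.
wlog xy : x y / x <= y.
  move=> H; case: (leP x y) => [/H //|/ltW yx].
  by rewrite distrC (distrC x); exact: H.
have g00 := g0_gt0.
case: (leP y 0) => y0.
  rewrite (Phi_nonpos y0) (Phi_nonpos (le_trans xy y0)) subrr normr0.
  by rewrite mulr_ge0 // ltW.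
case: (leP x 0) => x0.
  rewrite (Phi_nonpos x0).
  have /andP[H2 H] := Phi_bounds (lexx 0) (ltW y0).
  rewrite Phi0 !subr0 in H2 H.
  have mb := mB_gt0.
  rewrite sub0r normrN ger0_norm; last by rewrite (le_trans _ H2) // mulr_ge0 // ltW.
  rewrite distrC ger0_norm ?subr_ge0 //.
  apply: (le_trans H); apply: ler_wpM2l; [exact: ltW | lra].
have /andP[H2 H] := Phi_bounds (ltW x0) xy.
have mb := mB_gt0.
rewrite distrC ger0_norm; last by rewrite (le_trans _ H2) // mulr_ge0 // ?subr_ge0 // ltW.
by rewrite distrC ger0_norm ?subr_ge0.
Qed.

Lemma Phi_cont : continuous Phi.
Proof. apply: (@lip_continuous R Phi (g 0)) => x y; exact: Phi_lip. Qed.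

Lemma Phi_ge0 a : 0 <= Phi a.
Proof.
case: (leP a 0) => a0; first by rewrite Phi_nonpos.
have /andP[H _] := Phi_bounds (lexx 0) (ltW a0).
rewrite Phi0 !subr0 in H; apply: (le_trans _ H); rewrite mulr_ge0 // ?subr_ge0 ?ltW //.
exact: mB_gt0.
Qed.

Lemma Phi_lt a1 a2 : 0 <= a1 -> a1 < a2 -> Phi a1 < Phi a2.
Proof.
move=> a10 a12; have /andP[H _] := Phi_bounds a10 (ltW a12).
rewrite -subr_gt0; apply: lt_le_trans H; rewrite mulr_gt0 ?subr_gt0 //.
exact: mB_gt0.
Qed.

Lemma Phi_derive (a : R) : 0 < a -> is_derive a 1 Phi (h a).
Proof.
move=> a0; have hc : {for a, continuous h} by exact: h_cont.
have [d1 d2] := @continuous_FTC1_closed R h 0 a (a + 1) (ltr_pwDr ltr01 (lexx a)) (h_int (a + 1)) a0 hc.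
apply: DeriveDef => //; by rewrite -derive1E.
Qed.


Lemma Phi_ge_lin a : 0 <= a -> mB * a <= Phi a.
Proof.
by move=> a0; have /andP[+ _] := Phi_bounds (lexx 0) a0; rewrite Phi0 !subr0.
Qed.

Definition Phiinv y := xget 0 [set a | 0 <= a /\ Phi a = y].

Lemma Phiinv_spec y : 0 <= y -> 0 <= Phiinv y /\ Phi (Phiinv y) = y.
Proof.
move=> y0.
suff ex : exists a, 0 <= a /\ Phi a = y.
  exact: (xgetPex 0 (P := [set a | 0 <= a /\ Phi a = y]) ex).
have mb := mB_gt0.
have A0 : 0 <= y / mB by rewrite divr_ge0 // ltW.
have PA : y <= Phi (y / mB).
  by have := Phi_ge_lin A0; rewrite mulrC divfK // gt_eqF.
have cP : {within `[0, y / mB], continuous Phi} by exact: continuous_subspaceT Phi_cont.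
have Hv : Num.min (Phi 0) (Phi (y / mB)) <= y <= Num.max (Phi 0) (Phi (y / mB)).
  by apply/andP; split; [rewrite ge_min Phi0 y0|rewrite le_max PA orbT].
have [c] := IVT A0 cP Hv.
by rewrite in_itv /= => /andP[c0 _] Pc; exists c.
Qed.

Lemma Phiinv_neg y : y < 0 -> Phiinv y = 0.
Proof.
move=> y0; apply: xgetPN => a [_ Pa].
by have := Phi_ge0 a; rewrite Pa leNgt y0.
Qed.

Lemma Phiinv_ge0 y : 0 <= Phiinv y.
Proof.
case: (ltP y 0) => y0; first by rewrite Phiinv_neg.
by have [] := Phiinv_spec y0.
Qed.

Lemma PhiK a : 0 <= a -> Phiinv (Phi a) = a.
Proof.
move=> a0; have [p0 pE] := Phiinv_spec (Phi_ge0 a).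
case: (ltgtP (Phiinv (Phi a)) a) => // H.
  by have := Phi_lt p0 H; rewrite pE ltxx.
by have := Phi_lt a0 H; rewrite pE ltxx.
Qed.

Lemma Phiinv_le y : 0 <= y -> mB * Phiinv y <= y.
Proof.
move=> y0; have [p0 pE] := Phiinv_spec y0.
by have := Phi_ge_lin p0; rewrite pE.
Qed.

Lemma Phiinv_lip y1 y2 : `|Phiinv y1 - Phiinv y2| <= mB^-1 * `|y1 - y2|.
Proof.
have mb := mB_gt0.
wlog yy : y1 y2 / y1 <= y2.
  move=> H; case: (leP y1 y2) => [/H //|/ltW yx].
  by rewrite distrC (distrC y1); exact: H.
case: (ltP y2 0) => y2n.
  rewrite (Phiinv_neg y2n) (Phiinv_neg (le_lt_trans yy y2n)) subrr normr0.
  by rewrite mulr_ge0 // invr_ge0 ltW.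
case: (ltP y1 0) => y1n.
  rewrite (Phiinv_neg y1n) sub0r normrN ger0_norm ?Phiinv_ge0 //.
  rewrite distrC ger0_norm ?subr_ge0 // ler_pdivlMl //.
  apply: (le_trans (Phiinv_le y2n)); lra.
have [p1 e1] := Phiinv_spec y1n; have [p2 e2] := Phiinv_spec y2n.
have a12 : Phiinv y1 <= Phiinv y2.
  rewrite leNgt; apply/negP => H.
  have := Phi_lt p2 H; rewrite e1 e2 => H'.
  by have := le_lt_trans yy H'; rewrite ltxx.
have /andP[H _] := Phi_bounds p1 a12; rewrite e1 e2 in H.
rewrite distrC ger0_norm ?subr_ge0 //.
by rewrite distrC ger0_norm ?subr_ge0 // ler_pdivlMl.
Qed.

Lemma Phiinv_cont : continuous Phiinv.
Proof. apply: (@lip_continuous R Phiinv (mB^-1)) => x y; exact: Phiinv_lip. Qed.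

Definition V y := v (Phiinv y).

Lemma V_cont : continuous V.
Proof.
move=> y; apply: (continuous_comp (f := Phiinv) (g := v)); [exact: (@Phiinv_cont y)|exact: (@v_cont (Phiinv y))].
Qed.

Lemma V_gt0 y : 0 < V y.
Proof. exact: v_gt0. Qed.

Lemma VK a : 0 <= a -> V (Phi a) = v a.
Proof. by move=> a0; rewrite /V PhiK. Qed.


Definition W z := mu * z / g z.
Definition omega x := W (V (x - xm)).
Definition Gf x := bt x * omega x.
Definition Phihat a := xm + Phi a.

Lemma W_cont z : 0 < z -> {for z, continuous W}.
Proof.
move=> z0; apply: cvgM.
  apply: cvgM; [exact: cvg_cst|exact: cvg_id].
apply: cvgV; first by rewrite gt_eqF // gpos // ltW.
exact: g_cont_pos.
Qed.

Lemma omega_cont : continuous omega.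
Proof.
move=> x; apply: (continuous_comp (f := fun x => V (x - xm)) (g := W)); last exact/W_cont/V_gt0.
apply: (continuous_comp (f := fun x => x - xm) (g := V)); last exact: (@V_cont (x - xm)).
by apply: cvgB; [exact: cvg_id|exact: cvg_cst].
Qed.

Lemma W_gt0 z : 0 < z -> 0 < W z.
Proof. by move=> z0; rewrite /W divr_gt0 ?mulr_gt0 // gpos // ltW. Qed.

Lemma omega_gt0 x : 0 < omega x.
Proof. exact/W_gt0/V_gt0. Qed.

Lemma Gf_cont : continuous Gf.
Proof. by move=> x; apply: cvgM; [exact: bt_cont|exact: omega_cont]. Qed.

Lemma Gf_ge0 x : 0 <= Gf x.
Proof. by rewrite /Gf mulr_ge0 ?bt_ge0 // ltW // omega_gt0. Qed.

Lemma Phihat_derive (a : R) : 0 < a -> is_derive a 1 Phihat (h a).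
Proof.
move=> a0; have := is_deriveD (is_derive_cst xm a 1) (Phi_derive a0).
by rewrite add0r.
Qed.

Lemma Phihat_derive1 (a : R) : 0 < a -> (derive1 Phihat) a = h a.
Proof. by move=> a0; rewrite derive1E; have := Phihat_derive a0; move=> H; exact: derive_val. Qed.

Lemma subst_pt (a : R) : 0 < a ->
  ((Gf \o Phihat) * (derive1 Phihat)) a = b * (bt (xm + Phi a) * expR (- (mu * a))).
Proof.
move=> a0; rewrite !fctE Phihat_derive1 // /Gf /omega /Phihat.
have -> : xm + Phi a - xm = Phi a by rewrite addrC addKr.
rewrite VK ?ltW // /W /h.
have gne : g (v a) != 0 by rewrite gt_eqF // gpos // ltW // v_gt0.
have mne : mu != 0 by rewrite gt_eqF.
rewrite /v; field.
by rewrite mne /= -/(v a) gne.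
Qed.


Lemma Phihat_cont : continuous Phihat.
Proof. by move=> x; apply: cvgD; [exact: cvg_cst|exact: Phi_cont]. Qed.

Lemma sH1 : {in `[0, +oo[ &, {homo Phihat : x y / x < y}}.
Proof.
move=> x y; rewrite !in_itv /= !andbT => x0 y0 xy.
by rewrite ltrD2l; exact: Phi_lt.
Qed.

Lemma sH2 : {in `]0, +oo[, continuous (derive1 Phihat)}.
Proof.
move=> a; rewrite in_itv /= andbT => a0.
rewrite /continuous_at Phihat_derive1 //.
apply: (cvg_trans _ (@h_cont a)).
apply: near_eq_cvg; near=> y; rewrite Phihat_derive1 //.
near: y; exact: lt_nbhsr.
Unshelve. all: by end_near. Qed.

Lemma sH3 : cvg (derive1 Phihat x @[x --> 0^'+]).
Proof.
apply/cvg_ex; exists (h 0).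
apply: (cvg_trans _ (cvg_at_right_filter (@h_cont 0))).
apply: near_eq_cvg; near=> y; rewrite Phihat_derive1 //.
Unshelve. all: by end_near. Qed.

Lemma v_lim : v x @[x --> +oo] --> 0.
Proof.
rewrite (_ : 0 = 0 / mu * b); last by rewrite mul0r mul0r.
apply: cvgM; last exact: cvg_cst.
apply: cvgM; last exact: cvg_cst.
rewrite (_ : (fun x => expR (- (mu * x))) = (fun z => expR (- z)) \o (fun z => mu * z)) //.
apply: (@cvg_comp _ _ _ _ _ _ (pinfty_nbhs R)); last exact: cvgr_expR.
by apply: gt0_cvgMry => //; exact: cvg_id.
Qed.

Lemma h_lim : h x @[x --> +oo] --> g 0.
Proof.
apply/cvgrPdist_lt => e e0.
have := g_right0; move/cvgrPdist_lt => /(_ e e0) H.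
have H2 := v_lim H.
have H3 : \forall x \near +oo, 0 < v x -> `|g 0 - g (v x)| < e := H2.
near=> x.
apply: (near H3 x) => //; exact: v_gt0.
Unshelve. all: by end_near. Qed.

Lemma sH4 : cvg (derive1 Phihat x @[x --> +oo]).
Proof.
apply/cvg_ex; exists (g 0).
apply: (cvg_trans _ h_lim).
apply: near_eq_cvg; near=> y; rewrite Phihat_derive1 //.
Unshelve. all: by end_near. Qed.

Lemma sH5 : derivable_oy_Rcontinuous Phihat 0.
Proof.
split.
  move=> a; rewrite in_itv /= andbT => a0; by case: (Phihat_derive a0).
exact: cvg_at_right_filter (@Phihat_cont 0).
Qed.

Lemma sH6 : Phihat x @[x --> +oo] --> +oo.
Proof.
apply/cvgryPge => A.
have mb := mB_gt0.
near=> x.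
have x0 : 0 <= x by near: x; apply: nbhs_pinfty_ge; exact: num_real.
have xA : (A - xm) / mB <= x by near: x; apply: nbhs_pinfty_ge; exact: num_real.
have := Phi_ge_lin x0.
rewrite ler_pdivrMr // in xA.
rewrite /Phihat; lra.
Unshelve. all: by end_near. Qed.


Definition fint a := bt (xm + Phi a) * expR (- (mu * a)).

Lemma fint_cont : continuous fint.
Proof.
move=> a; apply: cvgM.
  apply: (continuous_comp (f := Phihat) (g := bt)); [exact: Phihat_cont|exact: bt_cont].
apply: continuous_comp; last exact: continuous_expR.
apply: cvgN; apply: cvgM; [exact: cvg_cst|exact: cvg_id].
Qed.

Lemma fint_ge0 a : 0 <= fint a.
Proof. by rewrite /fint mulr_ge0 ?bt_ge0 ?expR_ge0. Qed.

Lemma RfunE : Rfun mu xm g beta b = (\int[lebesgue_measure]_(a in `[0%R, +oo[%classic) (fint a)%:E)%E.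
Proof.
apply: eq_integral => a _; rewrite /fint btE //.
by rewrite lerDl; exact: Phi_ge0.
Qed.

Lemma repr : (b%:E * Rfun mu xm g beta b)%E =
  (\int[lebesgue_measure]_(x in `[xm, +oo[%classic) (Gf x)%:E)%E.
Proof.
rewrite RfunE -ge0_integralZl_EFin //; first last.
- exact: ltW.
- exact: cont_meas fint_cont.
- by move=> a _; rewrite lee_fin fint_ge0.
have Phihat0 : Phihat 0 = xm by rewrite /Phihat Phi0 addr0.
have cG : {within `[Phihat 0, +oo[, continuous Gf} by exact: continuous_subspaceT Gf_cont.
have pG : {in `]Phihat 0, +oo[, forall x, 0 <= Gf x} by move=> x _; exact: Gf_ge0.
have := increasing_ge0_integration_by_substitutiony sH1 sH2 sH3 sH4 sH5 sH6 cG pG.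
rewrite Phihat0 => ->.
have bf : continuous (fun a => b * fint a).
  by move=> a; apply: cvgM; [exact: cvg_cst|exact: fint_cont].
have mbf := cont_meas (D := `]0%R, +oo[%classic) bf.
rewrite -[LHS]integral_itv_obnd_cbnd; last first.
  apply: (@eq_measurable_fun _ _ _ _ _ (EFin \o (fun a => b * fint a))); last exact: mbf.
  by move=> a _; rewrite /= EFinM.
rewrite -[RHS]integral_itv_obnd_cbnd; last first.
  apply: (@eq_measurable_fun _ _ _ _ _ (EFin \o (fun a => b * fint a))); last exact: mbf.
  move=> a; rewrite inE /= in_itv /= andbT => a0.
  by rewrite /= subst_pt.
apply: eq_integral => a; rewrite inE /= in_itv /= andbT => a0.
by rewrite subst_pt.
Qed.


Definition kk := mu / 2.
Definition CC := (bt xm + `|L| * g 0 / kk) / kk.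

Lemma kk_gt0 : 0 < kk.
Proof. by rewrite /kk divr_gt0. Qed.

Lemma CC_ge0 : 0 <= CC.
Proof.
have k0 := kk_gt0.
by rewrite /CC divr_ge0 ?addr_ge0 ?bt_ge0 ?divr_ge0 ?mulr_ge0 // ltW // g0_gt0.
Qed.

Lemma fint_bound a : 0 <= a -> fint a <= CC * exponential_pdf kk a.
Proof.
move=> a0; have k0 := kk_gt0.
rewrite exponential_pdfE // mulNr /fint /CC.
have /andP[_ PA] := Phi_bounds (lexx 0) a0; rewrite Phi0 !subr0 in PA.
have Pg := Phi_ge0 a.
have bb : bt (xm + Phi a) <= bt xm + `|L| * g 0 * a.
  have := bt_lip (xm + Phi a) xm.
  have -> : xm + Phi a - xm = Phi a by rewrite addrC addKr.
  rewrite (ger0_norm Pg) => H.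
  have H2 := ler_norm (bt (xm + Phi a) - bt xm).
  have H3 : `|L| * Phi a <= `|L| * (g 0 * a) by rewrite ler_wpM2l.
  rewrite -mulrA; lra.
have e2 : expR (- (mu * a)) = expR (- (kk * a)) * expR (- (kk * a)).
  by rewrite -expRD; congr expR; rewrite /kk; field.
set E := expR (- (kk * a)).
have E0 : 0 < E by exact: expR_gt0.
have E1 : E * expR (kk * a) = 1 by rewrite /E mulrC expRxMexpNx_1.
have ex : kk * a <= expR (kk * a) by have := expR_ge1Dx (kk * a); lra.
have kaE : kk * a * E <= 1 by rewrite -E1 mulrC ler_wpM2l // ltW.
have El1 : E <= 1 by rewrite /E expR_le1 oppr_le0 mulr_ge0 // ltW.
set A := bt xm; set B := `|L| * g 0.
have A0 : 0 <= A by exact: bt_ge0.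
have B0 : 0 <= B by rewrite mulr_ge0 // ltW // g0_gt0.
have aE : a * E <= kk^-1.
  by rewrite -(ler_pM2l k0) mulrA mulfV ?gt_eqF.
have s1 : (A + B * a) * E <= A + B / kk.
  have : A * E <= A by rewrite ler_piMr.
  have : B * (a * E) <= B * kk^-1 by rewrite ler_wpM2l.
  rewrite mulrDl mulrA; lra.
rewrite e2 mulrA.
have -> : (A + B / kk) / kk * (kk * E) = (A + B / kk) * E.
  by field; rewrite gt_eqF.
apply: ler_wpM2r; first exact: ltW.
apply: le_trans s1; apply: ler_wpM2r; [exact: ltW|exact: bb].
Qed.

Lemma Rfun_fin : (Rfun mu xm g beta b < +oo)%E.
Proof.
have k0 := kk_gt0.
have mpdf : measurable_fun setT (EFin \o exponential_pdf kk).
  by apply/measurable_EFinP; exact: measurable_exponential_pdf.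
rewrite RfunE.
apply: (@le_lt_trans _ _ (\int[lebesgue_measure]_(a in `[0%R, +oo[%classic) (CC%:E * (exponential_pdf kk a)%:E))%E).
  apply: ge0_le_integral => //.
  - by move=> a _; rewrite lee_fin fint_ge0.
  - exact: cont_meas fint_cont.
  - apply: emeasurable_funM; first exact: measurable_cst.
    exact: measurable_funTS.
  - move=> a; rewrite /= in_itv /= andbT => a0.
    by rewrite -EFinM lee_fin fint_bound.
rewrite ge0_integralZl_EFin //; first last.
- exact: CC_ge0.
- exact: measurable_funTS.
- by move=> a _; rewrite lee_fin exponential_pdf_ge0 // ltW.
apply: lte_mul_pinfty; [by rewrite lee_fin CC_ge0|by []|].
apply: (@le_lt_trans _ _ (\int[lebesgue_measure]_x (exponential_pdf kk x)%:E)%E).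
  apply: ge0_subset_integral => //.
  by move=> a _; rewrite lee_fin exponential_pdf_ge0 // ltW.
by rewrite integral_exponential_pdf // ltry.
Qed.

End WithB.

Lemma v_ltdec b (b0 : 0 < b) t1 t2 : t1 < t2 -> v b t2 < v b t1.
Proof.
move=> t12; rewrite /v -!mulrA ltr_pM2r ?mulr_gt0 ?invr_gt0 //.
by rewrite ltr_expR ltrN2 ltr_pM2l.
Qed.

Lemma V_lt b1 b2 (h1 : 0 < b1) (h12 : b1 < b2) y : 0 <= y -> V b1 y < V b2 y.
Proof.
move=> y0; have h2 : 0 < b2 := lt_trans h1 h12.
have q0 : 0 < b2 / b1 by rewrite divr_gt0.
set s := ln (b2 / b1) / mu.
have s0 : 0 < s by rewrite divr_gt0 // ln_gt0 // ltr_pdivlMr // mul1r.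
have vs t : v b2 (t + s) = v b1 t.
  rewrite /v mulrDr opprD expRD.
  have -> : mu * s = ln (b2 / b1) by rewrite /s mulrC divfK // gt_eqF.
  rewrite [expR (- ln _)]expRN lnK ?posrE //.
  field; rewrite !gt_eqF //.
have hs t : h b2 (t + s) = h b1 t by rewrite /h vs.
have [p1 e1] := Phiinv_spec h1 y0; have [p2 e2] := Phiinv_spec h2 y0.
set a1 := Phiinv b1 y in p1 e1 *; set a2 := Phiinv b2 y in p2 e2 *.
pose D a := Phi b2 (a + s) - Phi b1 a.
have Dc : continuous D.
  move=> a; apply: cvgB; last exact: Phi_cont.
  apply: (continuous_comp (f := fun a => a + s) (g := Phi b2)).
    by apply: cvgD; [exact: cvg_id|exact: cvg_cst].
  exact: Phi_cont.
have DE : D a1 = D 0.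
  move: p1; rewrite le_eqVlt => /predU1P[<- //|a10].
  have dD : forall x, x \in `]0, a1[ -> is_derive x 1 D 0.
    move=> x; rewrite in_itv /= => /andP[x0 _].
    have xs0 : 0 < x + s by rewrite addr_gt0.
    have d2 : is_derive x 1 (Phi b2 \o shift s) (h b2 (x + s) * 1).
      apply: is_derive1_comp; last exact: is_derive_shift.
      exact: Phi_derive.
    have := is_deriveB d2 (Phi_derive h1 x0).
    by rewrite mulr1 hs subrr.
  have [c _ E] := MVT (df := fun _ : R => 0) a10 dD (continuous_subspaceT Dc).
  by move: E; rewrite mul0r => /eqP; rewrite subr_eq0 => /eqP.
rewrite ltNge; apply/negP => H.
have H1 : V b1 y = v b2 (a1 + s) by rewrite vs.
have as2 : a1 + s <= a2.
  rewrite leNgt; apply/negP => H2.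
  have := v_ltdec h2 H2; rewrite -H1 /V -/a2 => H3.
  by have := le_lt_trans H H3; rewrite ltxx.
have Pge : Phi b2 (a1 + s) <= Phi b2 a2.
  move: as2; rewrite le_eqVlt => /predU1P[-> //|H4].
  by apply/ltW/Phi_lt => //; rewrite addr_ge0 // ltW.
have : Phi b2 (a1 + s) = Phi b2 s + y.
  have := DE; rewrite /D add0r (Phi_nonpos _ (lexx 0)) subr0 e1.
  by move=> <-; rewrite subrK.
have Ps : 0 < Phi b2 s by have := Phi_lt h2 (lexx 0) s0; rewrite (Phi_nonpos _ (lexx 0)).
move=> HH; rewrite HH e2 in Pge; lra.
Qed.

Lemma W_lt z1 z2 : 0 < z1 -> z1 < z2 -> W z1 < W z2.
Proof.
move=> z10 z12; have z20 := lt_trans z10 z12.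
have g1 : 0 < g z1 by apply: gpos; exact: ltW.
have g2 : 0 < g z2 by apply: gpos; exact: ltW.
have g21 : g z2 < g z1 by apply: gdec => //; exact: ltW.
rewrite /W -!mulrA ltr_pM2l //.
apply: (@lt_le_trans _ _ (z2 / g z1)).
  by rewrite ltr_pM2r // invr_gt0.
rewrite ler_pM2l // ltW //.
by rewrite ltf_pV2 // posrE.
Qed.

Context (x0 : R) (xmx0 : xm <= x0)
  (negl : lebesgue_measure.-negligible [set x | x0 <= x /\ beta x <= 0]).

Lemma int_pos (w : R -> R) : continuous w -> (forall x, xm <= x -> 0 < w x) ->
  (0 < \int[lebesgue_measure]_(x in `[xm, +oo[%classic) (bt x * w x)%:E)%E.
Proof.
move=> wc wp.
have fc : continuous (fun x => bt x * w x).
  by move=> x; apply: cvgM; [exact: bt_cont|exact: wc].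
have mf := cont_meas (D := `[xm, +oo[%classic) fc.
have f0 : forall x, `[xm, +oo[%classic x -> (0 <= (bt x * w x)%:E)%E.
  move=> x; rewrite /= in_itv /= andbT => xx.
  by rewrite lee_fin mulr_ge0 ?bt_ge0 // ltW // wp.
rewrite lt0e integral_ge0 // andbT; apply/negP => /eqP H0.
have : ae_eq lebesgue_measure `[xm, +oo[%classic (fun x => (bt x * w x)%:E) (cst 0%E).
  have := @ae_eq_integral_abs _ _ _ lebesgue_measure _ (measurable_itv _) _ mf.
  move=> [+ _]; apply.
  rewrite -H0; apply: eq_integral => x xD; rewrite gee0_abs //.
  by apply: f0; move: xD; rewrite inE.
move=> [N [mN N0 sub]].
have neg2 : lebesgue_measure.-negligible `[x0, +oo[%classic.
  apply: (negligibleS _ (negligibleU (ex_intro _ N (And3 mN N0 sub)) negl)).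
  move=> x; rewrite /= in_itv /= andbT => xx.
  have xxm : xm <= x := le_trans xmx0 xx.
  have [Hx|Hx] := pselect ((`[xm, +oo[%classic : set R) x -> (bt x * w x)%:E = 0%E).
    right; split => //.
    have := Hx; rewrite /= in_itv /= andbT => /(_ xxm) /eqP; rewrite eqe mulf_eq0.
    rewrite (gt_eqF (wp _ xxm)) orbF => /eqP; rewrite btE // => ->; exact: lexx.
  by left.
have := (negligibleP _ _).1 neg2.
have := lebesgue_measure_itv `[x0, +oo[; rewrite /= => ->.
by rewrite ltry => /(_ (measurable_itv _)).

Qed.

Lemma omega_lt b1 b2 : 0 < b1 -> b1 < b2 -> forall x, xm <= x ->
  0 < omega b2 x - omega b1 x.
Proof.
move=> b10 b12 x xx; rewrite subr_gt0 /omega.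
apply: W_lt; first exact: V_gt0.
by apply: V_lt => //; rewrite subr_ge0.
Qed.

Lemma main_lt b1 b2 : 0 <= b1 -> b1 < b2 ->
  (Ffun mu xm g beta b1 < Ffun mu xm g beta b2)%E.
Proof.
move=> b10 b12.
have b20 : 0 < b2 := le_lt_trans b10 b12.
move: b10; rewrite le_eqVlt => /predU1P[<-|b10].
  rewrite /Ffun mul0e (repr b20).
  apply: int_pos; first exact: omega_cont.
  by move=> x _; exact: omega_gt0.
rewrite /Ffun (repr b10) (repr b20).
have fin : (\int[lebesgue_measure]_(x in `[xm, +oo[%classic) (Gf b1 x)%:E)%E \is a fin_num.
  rewrite -(repr b10) ge0_fin_numE; last first.
    apply: mule_ge0; first by rewrite lee_fin ltW.
    by rewrite (RfunE b10); apply: integral_ge0 => a _; rewrite lee_fin fint_ge0.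
  apply: lte_mul_pinfty; [by rewrite lee_fin ltW|by []|exact: Rfun_fin].
have dc : continuous (fun x => omega b2 x - omega b1 x).
  by move=> x; apply: cvgB; exact: omega_cont.
have -> : (\int[lebesgue_measure]_(x in `[xm, +oo[%classic) (Gf b2 x)%:E)%E =
    (\int[lebesgue_measure]_(x in `[xm, +oo[%classic)
       ((Gf b1 x)%:E + (bt x * (omega b2 x - omega b1 x))%:E))%E.
  by apply: eq_integral => x _; rewrite -EFinD /Gf mulrBr addrC subrK.
have m1 : measurable_fun `[xm, +oo[%classic (fun x => (Gf b1 x)%:E).
  apply: cont_meas; exact: Gf_cont.
have m2 : measurable_fun `[xm, +oo[%classic
    (fun x => (bt x * (omega b2 x - omega b1 x))%:E).
  apply: cont_meas => x; apply: cvgM; [exact: bt_cont|exact: dc].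
have p1 : forall x, `[xm, +oo[%classic x -> (0 <= (Gf b1 x)%:E)%E.
  by move=> x _; rewrite lee_fin Gf_ge0.
have p2 : forall x, `[xm, +oo[%classic x ->
    (0 <= (bt x * (omega b2 x - omega b1 x))%:E)%E.
  move=> x; rewrite /= in_itv /= andbT => xx.
  by rewrite lee_fin mulr_ge0 ?bt_ge0 // ltW // omega_lt.
rewrite ge0_integralD //.
rewrite lteDl //.
by apply: int_pos => // x xx; exact: omega_lt.
Qed.

End Main.

Unset Implicit Arguments.
Set Strict Implicit.

Theorem theorem1 (R : realType) (mu xm x0 : R) (g beta : R -> R) :
  0 < mu -> 0 <= xm ->
  (* g : [0,+oo) -> (0,+oo), continuous, strictly decreasing, g(+oo) = 0 *)
  {within `[0%R, +oo[%classic, continuous g} ->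
  (forall x, 0 <= x -> 0 < g x) ->
  (forall x y, 0 <= x -> x < y -> g y < g x) ->
  g x @[x --> +oo] --> 0 ->
  (* beta : [xm,+oo) -> [0,+oo), globally Lipschitz *)
  (forall x, xm <= x -> 0 <= beta x) ->
  (exists L : R, forall x y, xm <= x -> xm <= y ->
       `|beta x - beta y| <= L * `|x - y|) ->
  (* beta > 0 a.e. on [x0,+oo) for some x0 >= xm *)
  xm <= x0 ->
  lebesgue_measure.-negligible [set x | x0 <= x /\ beta x <= 0] ->
  forall b1 b2 : R, 0 <= b1 -> b1 < b2 ->
    (Ffun mu xm g beta b1 < Ffun mu xm g beta b2)%E.
Proof.
move=> mu0 xm0 gc gpos gdec _ bpos [L bL] xmx0 negl b1 b2 b10 b12.
exact: (main_lt mu0 gc gpos gdec bpos bL xmx0 negl b10 b12).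
Qed.
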